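(* Let $l,r$ be positive integers. For every $n\ge r$, the sequence $k\mapsto L_r^{(l)}(n,k)$ is log-concave, i.e. $L_r^{(l)}(n,k)^2\ge L_r^{(l)}(n,k-1)L_r^{(l)}(n,k+1)$ for all $k$.
   Context: For a set partition $\Pi$ of $[n]=\{1,\dots,n\}$, the block leader set $\mathrm{bl}(\Pi)$ is the set of minimum elements of the blocks of $\Pi$. The $(l,r)$-Lah number $L_r^{(l)}(n,k)$ is the number of $l$-tuples $(\Pi_1,\dots,\Pi_l)$ where each $\Pi_j$ is a partition of $[n]$ into $k$ nonempty blocks each equipped with a linear order, such that $\{1,\dots,r\}\subseteq\mathrm{bl}(\Pi_1)$ and $\mathrm{bl}(\Pi_1)=\mathrm{bl}(\Pi_2)=\cdots=\mathrm{bl}(\Pi_l)$ (and $L_r^{(l)}(n,k)=0$ when no such tuples exist). *)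

(* Defs.v *)
From mathcomp Require Import all_boot.
Set Implicit Arguments. Unset Strict Implicit. Unset Printing Implicit Defensive.

(* The ground set [n] = {1,...,n} is modelled by 'I_n = {0,...,n-1}
   (order-preserving shift i |-> i+1). *)

(* A set partition of [n] with, on each block, a linear order. *)
Definition LahT (n : nat) : finType :=
  ({set {set 'I_n}} * {ffun 'I_n * 'I_n -> bool})%type.

Definition lah_partition (n k : nat) (Pi : LahT n) : bool :=
  let P := Pi.1 in let R := Pi.2 in
  [&& partition P [set: 'I_n], #|P| == k,
      [forall x, forall y, R (x, y) ==> (pblock P x == pblock P y)],
      [forall x, ~~ R (x, x)],
      [forall x, forall y, forall z, R (x, y) && R (y, z) ==> R (x, z)] &
      [forall x, forall y,
         (x != y) && (pblock P x == pblock P y) ==> R (x, y) || R (y, x)]].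

Definition bl (n : nat) (P : {set {set 'I_n}}) : {set 'I_n} :=
  [set x : 'I_n | [exists B in P, (x \in B) && [forall y in B, x <= y]]].

(* Tuples are indexed by 'I_l (Pi_1 is index 0). *)
Definition lahL (l r n k : nat) : nat :=
  #|[set t : {ffun 'I_l -> LahT n} |
      [&& [forall i, lah_partition k (t i)],
          [forall i : 'I_l, (i == 0 :> nat) ==>
              [forall x : 'I_n, (x < r) ==> (x \in bl (t i).1)]] &
          [forall i, forall j, bl (t i).1 == bl (t j).1]]]|.

(* Main.v *)
Require Import Defs.
From mathcomp Require Import all_boot all_algebra zify ring.
Set Implicit Arguments. Unset Strict Implicit. Unset Printing Implicit Defensive.


Lemma step_ineq a0 a1 a2 a3 g0 g1 g2 g3 :
  0 < g1 -> 0 < g2 -> g0 * g3 <= g1 * g2 ->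
  (0 < a0 * a3 -> 0 < a1 * a2) ->
  a0 * a2 * g1 <= a1 ^ 2 * g0 -> a1 * a3 * g2 <= a2 ^ 2 * g1 ->
  (a0 + g0 * a1) * (a2 + g2 * a3) * g3 <= (a1 + g1 * a2) ^ 2 * g2.
Proof.
move=> g1p g2p hg hpos h1 h2.
have t1 : a0 * a2 * g3 <= a1 ^ 2 * g2.
  rewrite -(leq_pmul2l g1p).
  have e1 : g1 * (a0 * a2 * g3) = (a0 * a2 * g1) * g3 by ring.
  have e2 : g1 * (a1 ^ 2 * g2) = a1 ^ 2 * (g1 * g2) by ring.
  rewrite e1 e2; apply: (leq_trans (leq_mul h1 (leqnn g3))).
  rewrite -mulnA; exact: leq_mul.
have t3 : g0 * g2 * (a1 * a3) * g3 <= g1 ^ 2 * a2 ^ 2 * g2.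
  have e1 : g0 * g2 * (a1 * a3) * g3 = (g0 * g3) * (a1 * a3 * g2) by ring.
  have e2 : g1 ^ 2 * a2 ^ 2 * g2 = (g1 * g2) * (a2 ^ 2 * g1) by ring.
  rewrite e1 e2; exact: leq_mul.
have tm1 : g0 * a1 * a2 * g3 <= g1 * a1 * a2 * g2.
  have e1 : g0 * a1 * a2 * g3 = (g0 * g3) * (a1 * a2) by ring.
  have e2 : g1 * a1 * a2 * g2 = (g1 * g2) * (a1 * a2) by ring.
  by rewrite e1 e2 leq_mul.
have tm2 : g2 * a0 * a3 * g3 <= g1 * a1 * a2 * g2.
  case: (posnP (a0 * a3)) => [h0|h0].
    have -> : g2 * a0 * a3 * g3 = g2 * (a0 * a3) * g3 by ring.
    by rewrite h0 muln0 mul0n.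
  have p12 := hpos h0.
  have hx : a0 * a3 * g2 <= a1 * a2 * g0.
    have hh := leq_mul h1 h2.
    have e1 : (a0 * a2 * g1) * (a1 * a3 * g2) = (a0 * a3 * g2) * (a1 * a2 * g1) by ring.
    have e2 : (a1 ^ 2 * g0) * (a2 ^ 2 * g1) = (a1 * a2 * g0) * (a1 * a2 * g1) by ring.
    rewrite e1 e2 in hh.
    by rewrite -(leq_pmul2r (_ : 0 < a1 * a2 * g1)) // !muln_gt0 -(muln_gt0 a1) p12.
  have hy : a0 * a3 * (g2 * g3) <= a1 * a2 * (g1 * g2).
    have e1 : a0 * a3 * (g2 * g3) = (a0 * a3 * g2) * g3 by ring.
    have e2 : a1 * a2 * (g1 * g2) = a1 * a2 * (g0 * g3) + a1 * a2 * (g1 * g2 - g0 * g3).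
      by rewrite -mulnDr subnKC.
    rewrite e1 e2; apply: leq_trans (leq_addr _ _).
    have -> : a1 * a2 * (g0 * g3) = (a1 * a2 * g0) * g3 by ring.
    exact: leq_mul.
  have e1 : g2 * a0 * a3 * g3 = a0 * a3 * (g2 * g3) by ring.
  have e2 : g1 * a1 * a2 * g2 = a1 * a2 * (g1 * g2) by ring.
  by rewrite e1 e2.
have -> : (a0 + g0 * a1) * (a2 + g2 * a3) * g3 =
   a0 * a2 * g3 + g2 * a0 * a3 * g3 + g0 * a1 * a2 * g3 + g0 * g2 * (a1 * a3) * g3 by ring.
have -> : (a1 + g1 * a2) ^ 2 * g2 =
   a1 ^ 2 * g2 + g1 * a1 * a2 * g2 + g1 * a1 * a2 * g2 + g1 ^ 2 * a2 ^ 2 * g2 by ring.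
by rewrite !leq_add.
Qed.

Fixpoint Fc (l r m k : nat) : nat :=
  match m with
  | 0 => (k == 0)
  | m'.+1 => (if k is k'.+1 then Fc l r m' k' else 0)
             + (if r <= m' then (m' + k) ^ l * Fc l r m' k else 0)
  end.

Lemma Fc_small l r m k : m <= r -> Fc l r m k = (k == m).
Proof.
elim: m k => [|m IH] k hm //=.
rewrite leqNgt hm /= addn0.
case: k => [|k] //=; rewrite IH ?eqSS //; exact: ltnW.
Qed.

Lemma Fc_supp l r m k : 0 < r -> r <= m -> (0 < Fc l r m k) = (r <= k <= m).
Proof.
move=> r0; elim: m k => [|m IH] k hm.
  by move: hm; rewrite leqn0 => /eqP E; rewrite E in r0.
case: (ltngtP r m.+1) hm => // [hlt|heq] _.
  have hrm : r <= m := hlt.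
  rewrite /= hrm.
  have gpos : 0 < (m + k) ^ l by rewrite expn_gt0 addn_gt0 (leq_trans r0 hrm).
  case: k gpos => [|k] gpos.
    rewrite add0n muln_gt0 gpos IH //=; lia.
  rewrite addn_gt0 muln_gt0 gpos IH // IH //=.
  apply/idP/idP.
    case/orP => /andP[a b]; apply/andP; split; lia.
  move=> /andP[a b]; case: (ltngtP r k.+1) a => // [h1|h1] _.
    apply/orP; left; apply/andP; split; lia.
  apply/orP; right; apply/andP; split; lia.
rewrite -heq Fc_small // lt0b eqn_leq andbC.
done.
Qed.

Lemma Fc_inv l r m k : 0 < r -> r <= m ->
  Fc l r m k.-1 * Fc l r m k.+1 * (m + k + 1) ^ l <= Fc l r m k ^ 2 * (m + k) ^ l.
Proof.
move=> r0; elim: m k => [|m IH] k hm.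
  by move: hm; rewrite leqn0 => /eqP E; rewrite E in r0.
case: (ltngtP r m.+1) hm => // [hlt|heq] _; last first.
  rewrite -heq !Fc_small //.
  have -> : (k.-1 == r) * (k.+1 == r) = 0.
    by case: eqP; case: eqP => //=; lia.
  by rewrite !mul0n.
have hrm : r <= m := hlt.
have F0 : Fc l r m 0 = 0.
  apply/eqP; rewrite -leqn0 leqNgt Fc_supp //; lia.
have E : forall j, Fc l r m.+1 j.+1 = Fc l r m j + (m + j.+1) ^ l * Fc l r m j.+1.
  by move=> j; rewrite /= hrm.
case: k => [|[|j]].
- rewrite /= hrm F0 muln0 !mul0n; done.
- rewrite /= hrm F0 muln0 !mul0n; done.
idtac.
change (j.+2.-1) with j.+1; rewrite !E.
have gp : forall c, 0 < (m + c.+1) ^ l by move=> c; rewrite expn_gt0 addnS.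
have := @step_ineq (Fc l r m j) (Fc l r m j.+1) (Fc l r m j.+2) (Fc l r m j.+3)
   ((m + j.+1) ^ l) ((m + j.+2) ^ l) ((m + j.+3) ^ l) ((m + j.+4) ^ l) (gp _) (gp _).
have hg : (m + j.+1) ^ l * (m + j.+4) ^ l <= (m + j.+2) ^ l * (m + j.+3) ^ l.
  rewrite -!expnMn; case: (posnP l) => [->|lp]; first by rewrite !expn0.
  rewrite leq_exp2r //; nia.
have hs : 0 < Fc l r m j * Fc l r m j.+3 -> 0 < Fc l r m j.+1 * Fc l r m j.+2.
  rewrite !muln_gt0 !Fc_supp //; lia.
have h1 := IH j.+1 hrm.
have h2 := IH j.+2 hrm.
move=> /(_ hg hs).
simpl in h1, h2.
have -> : m.+1 + j.+2 + 1 = m + j.+4 by lia.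
have -> : m.+1 + j.+2 = m + j.+3 by lia.
have e1 : m + j.+1 + 1 = m + j.+2 by lia.
have e2 : m + j.+2 + 1 = m + j.+3 by lia.
rewrite e1 in h1; rewrite e2 in h2.
apply.
- move: h1. by rewrite (mulnC (Fc _ _ _ j.+1 ^ 2)).
- done.
Qed.

Lemma Fc_lc l r n k : 0 < r -> r <= n ->
  Fc l r n k.-1 * Fc l r n k.+1 <= Fc l r n k ^ 2.
Proof.
move=> r0 hn; have h := Fc_inv l k r0 hn.
have gp : 0 < (n + k) ^ l by rewrite expn_gt0 addn_gt0 (leq_trans r0 hn).
have mono : (n + k) ^ l <= (n + k + 1) ^ l.
  case: (posnP l) => [->|lp]; first by rewrite !expn0.
  by rewrite leq_exp2r // addn1.
rewrite -(leq_pmul2r gp); apply: leq_trans h.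
by rewrite leq_mul2l mono orbT.
Qed.

Lemma pblock_notin (T : finType) (P : {set {set T}}) x :
  x \notin cover P -> pblock P x = set0.
Proof.
move=> h; rewrite /pblock; case: pickP => [B /andP[PB xB]|] //=.
by case/negP: h; apply/bigcupP; exists B.
Qed.

Section Struct.
Variable N : nat.
Local Notation E := 'I_N.
Implicit Types (x y w a b : E) (B C D : {set E}) (P Q : {set {set E}}).

Definition A (m : nat) : {set E} := [set x : E | x < m].

Definition mn (B : {set E}) (x : E) := (x \in B) && [forall y in B, x <= y].

Lemma blP (P : {set {set E}}) x : reflect (exists2 B, B \in P & mn B x) (x \in bl P).
Proof. rewrite inE; exact: (iffP exists_inP). Qed.

Definition okP (m k : nat) (s : LahT N) : bool :=
  [&& partition s.1 (A m), #|s.1| == k,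
      [forall x : E, forall y : E, s.2 (x, y) ==> (x < m) && (y \in pblock s.1 x)],
      [forall x : E, ~~ s.2 (x, x)],
      [forall x : E, forall y : E, forall w : E, s.2 (x, y) && s.2 (y, w) ==> s.2 (x, w)] &
      [forall x : E, forall y : E, (x < m) && (x != y) && (y \in pblock s.1 x) ==>
         s.2 (x, y) || s.2 (y, x)]].

Record okR (m : nat) (P : {set {set E}}) (R : {ffun E * E -> bool}) : Prop := OkR {
  okpart : partition P (A m);
  oksupp : forall x y : E, R (x, y) -> (x < m) /\ (y \in pblock P x);
  okirr : forall x : E, ~~ R (x, x);
  oktr : forall x y w : E, R (x, y) -> R (y, w) -> R (x, w);
  oktot : forall x y : E, x < m -> x != y -> y \in pblock P x -> R (x, y) || R (y, x) }.

Lemma okPP m k s : reflect (okR m s.1 s.2 /\ #|s.1| = k) (okP m k s).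
Proof.
apply: (iffP idP).
  case/and5P => h1 /eqP h2 /forallP h3 /forallP h4 /andP[/forallP h5 /forallP h6].
  split => //; split => //.
  - by move=> x y hR; move: (forallP (h3 x) y); rewrite hR => /andP[-> ->].
  - by move=> x y w a b; move: (forallP (forallP (h5 x) y) w); rewrite a b.
  - by move=> x y a b c; move: (forallP (h6 x) y); rewrite a b c.
case=> [[h1 h3 h4 h5 h6] h2]; apply/and5P; split => //; first exact/eqP.
- apply/forallP => x; apply/forallP => y; apply/implyP => /h3 [-> ->] //.
- exact/forallP.
apply/andP; split.
- apply/forallP => x; apply/forallP => y; apply/forallP => w.
  by apply/implyP => /andP[a b]; apply: h5 a b.
- apply/forallP => x; apply/forallP => y; apply/implyP => /andP[/andP[a b] c].
  exact: h6.
Qed.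

Section OkFacts.
Variables (m : nat) (P : {set {set E}}) (R : {ffun E * E -> bool}).
Hypothesis ok : okR m P R.

Lemma ok_cover x : (x \in cover P) = (x < m).
Proof. by rewrite (cover_partition (okpart ok)) inE. Qed.

Lemma ok_triv : trivIset P.
Proof. exact: partition_trivIset (okpart ok). Qed.

Lemma ok_self x : x < m -> x \in pblock P x.
Proof. by move=> h; rewrite mem_pblock ok_cover. Qed.

Lemma ok_mem x : x < m -> pblock P x \in P.
Proof. by move=> h; apply: pblock_mem; rewrite ok_cover. Qed.

Lemma ok_blk B x : B \in P -> x \in B -> pblock P x = B.
Proof. move=> a b; exact: def_pblock ok_triv a b. Qed.

Lemma ok_sub B x : B \in P -> x \in B -> x < m.
Proof. by move=> a b; rewrite -ok_cover; apply/bigcupP; exists B. Qed.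

Lemma ok_same x y : y \in pblock P x -> pblock P y = pblock P x.
Proof. exact: same_pblock ok_triv. Qed.

Lemma ok_lt2 x y : R (x, y) -> y < m.
Proof.
case/(oksupp ok) => hx hy; apply: (@ok_sub (pblock P x)) => //; exact: ok_mem.
Qed.

Lemma ok_symb x y : x < m -> y \in pblock P x -> x \in pblock P y.
Proof. by move=> hx hy; rewrite (ok_same hy) ok_self. Qed.

End OkFacts.

Lemma pblockD1 P B x : trivIset P -> x \notin B -> pblock (P :\ B) x = pblock P x.
Proof.
move=> tP xB; case: (boolP (x \in cover P)) => hx.
  have hm := pblock_mem hx; have hs : x \in pblock P x by rewrite mem_pblock.
  apply: def_pblock => //; first exact: trivIsetD.
  rewrite in_setD1 hm andbT; apply: contraNneq xB => <-; done.
rewrite !pblock_notin //; apply: contra hx => /bigcupP[D]; rewrite in_setD1 => /andP[_ hD] xD.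
by apply/bigcupP; exists D.
Qed.

Lemma pblockU1 P B x : trivIset (B |: P) -> x \notin B -> pblock (B |: P) x = pblock P x.
Proof.
move=> tP xB; case: (boolP (x \in cover P)) => hx.
  have hm := pblock_mem hx; have hs : x \in pblock P x by rewrite mem_pblock.
  by apply: def_pblock => //; rewrite in_setU1 hm orbT.
rewrite !pblock_notin //; apply: contra hx => /bigcupP[D]; rewrite in_setU1 => /orP[/eqP->|hD] xD.
  by rewrite xD in xB.
by apply/bigcupP; exists D.
Qed.

Lemma pblock_repl P B1 B2 x : trivIset P -> trivIset (B2 |: (P :\ B1)) ->
  x \notin B1 -> x \notin B2 -> pblock (B2 |: (P :\ B1)) x = pblock P x.
Proof. by move=> t1 t2 h1 h2; rewrite pblockU1 // pblockD1. Qed.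

Lemma bl_U1 B P : bl (B |: P) = [set x | mn B x] :|: bl P.
Proof.
apply/setP => x; rewrite in_setU [x \in [set y | mn B y]]in_set; apply/blP/orP.
  by case=> D; rewrite in_setU1 => /orP[/eqP->|hD] h; [left|right; apply/blP; exists D].
case=> [h|/blP[D hD h]]; [exists B => //; exact: setU11|exists D => //; exact: setU1r].
Qed.

Lemma bl_D1 P B : trivIset P -> B \in P -> bl (P :\ B) = bl P :\: B.
Proof.
move=> tP hB; apply/setP => x; rewrite in_setD; apply/blP/andP.
  case=> D; rewrite in_setD1 => /andP[nDB hD] h; split; last by apply/blP; exists D.
  move/trivIsetP: (tP) => tP'.
  have := tP' D B hD hB nDB; rewrite disjoint_sym => /disjointFl->//.
  by case/andP: h.
case=> nxB /blP[D hD h]; exists D => //; rewrite in_setD1 hD andbT.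
by apply: contraNneq nxB => <-; case/andP: h.
Qed.

Lemma bl_repl P B1 B2 : trivIset P -> B1 \in P -> (forall x, mn B2 x = mn B1 x) ->
  bl (B2 |: (P :\ B1)) = bl P.
Proof.
move=> tP hB e; rewrite bl_U1 bl_D1 //; apply/setP => x; rewrite in_setU in_setD [x \in [set y | mn B2 y]]in_set e.
apply/idP/idP.
  case/orP => [h|/andP[_ ->]] //; by apply/blP; exists B1.
move=> h; case: (boolP (x \in B1)) => xB; last by apply/orP; right; rewrite h.
case/blP: h => D hD h; suff -> : B1 = D by rewrite h.
have e1 := def_pblock tP hB xB; case/andP: (h) => xD _.
by rewrite -e1 (def_pblock tP hD xD).
Qed.

Section Step.
Variables (m : nat) (z : E).
Hypothesis hz : nat_of_ord z = m.

Lemma ltS x : (x < m.+1) = (x == z) || (x < m).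
Proof. by rewrite -(inj_eq val_inj) /= hz ltnS leq_eqVlt. Qed.

Lemma zA : z \notin A m.
Proof. by rewrite inE hz ltnn. Qed.

Lemma A_S : A m.+1 = z |: A m.
Proof. by apply/setP => x; rewrite !inE ltS. Qed.

Lemma z_notin_ok P R : okR m P R -> z \notin cover P.
Proof. by move=> ok; rewrite (ok_cover ok) hz ltnn. Qed.

Lemma ok_Rz1 P R b : okR m P R -> R (z, b) = false.
Proof. by move=> ok; apply/negP => /(oksupp ok) []; rewrite hz ltnn. Qed.

Lemma ok_Rz2 P R a : okR m P R -> R (a, z) = false.
Proof. by move=> ok; apply/negP => /(ok_lt2 ok); rewrite hz ltnn. Qed.

Lemma mn_U1 C x : C != set0 -> C \subset A m -> mn (z |: C) x = mn C x.
Proof.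
move=> /set0Pn[c cC] sC; rewrite /mn; apply/andP/andP.
  case=> /setU1P[ex|xC] /forall_inP h.
    have := h c (setU1r _ cC); have := subsetP sC c cC; rewrite inE ex hz.
    by move=> a b; have := leq_trans a b; rewrite ltnn.
  by split => //; apply/forall_inP => y yC; apply: h; rewrite setU1r.
case=> xC /forall_inP h; split; first by rewrite setU1r.
apply/forall_inP => y /setU1P[->|yC]; last exact: h.
have := subsetP sC x xC; rewrite inE hz; exact: ltnW.
Qed.


Lemma bl_lt P R x : okR m P R -> x \in bl P -> x < m.
Proof. move=> ok /blP[B hB /andP[xB _]]. exact: (ok_sub ok hB xB). Qed.

Lemma z_notin_bl P R : okR m P R -> z \notin bl P.
Proof. by move=> ok; apply/negP => /(bl_lt ok); rewrite hz ltnn. Qed.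

Lemma okL_blk P R : okR m.+1 P R -> z \in bl P -> [set z] \in P.
Proof.
move=> ok /blP[B hB /andP[zB /forall_inP hmin]].
suff -> : [set z] = B by [].
apply/setP => x; rewrite in_set1; apply/idP/idP => [/eqP->//|xB].
have h1 := hmin x xB; have h2 := ok_sub ok hB xB.
rewrite -(inj_eq val_inj) /= eqn_leq h1 andbT; move: h2; rewrite hz ltnS //.
Qed.

Lemma okL_rm P R : okR m.+1 P R -> z \in bl P -> okR m (P :\ [set z]) R.
Proof.
move=> ok zbl; have hB := okL_blk ok zbl; have tP := ok_triv ok.
have pb : forall x, x != z -> pblock (P :\ [set z]) x = pblock P x.
  by move=> x xz; rewrite pblockD1 // in_set1.
have pz : pblock P z = [set z] := ok_blk ok hB (set11 z).
split.
- suff -> : A m = A m.+1 :\: [set z] by exact: partitionD1 (okpart ok) hB.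
  apply/setP => x; rewrite in_setD in_set1 !in_set ltS.
  by case: (eqVneq x z) => [->|//]; rewrite hz ltnn.
- move=> x y hR; have [hx hy] := oksupp ok hR.
  case: (eqVneq x z) => [exz|nxz].
    subst x; rewrite pz in_set1 in hy; move/eqP: hy => eyz; subst y.
    by rewrite (negbTE (okirr ok z)) in hR.
  by move: hx; rewrite ltS (negbTE nxz) /= => hx; rewrite pb.
- exact: okirr ok.
- exact: oktr ok.
- move=> x y hx nxy; rewrite pb; last first.
    by apply: contraTneq hx => ->; rewrite hz ltnn.
  have hx' : x < m.+1 by rewrite ltS hx orbT.
  exact: (oktot ok hx' nxy).
Qed.

Lemma okL_add P R : okR m P R -> okR m.+1 ([set z] |: P) R.
Proof.
move=> ok; have zc := z_notin_ok ok.
have part : partition ([set z] |: P) (A m.+1).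
  rewrite A_S; apply: partitionU1; first exact: (okpart ok).
    by apply/set0Pn; exists z; rewrite set11.
  by rewrite disjoints1 zA.
have tP := partition_trivIset part.
have pb : forall x, x != z -> pblock ([set z] |: P) x = pblock P x.
  by move=> x xz; rewrite pblockU1 // in_set1.
have pz : pblock ([set z] |: P) z = [set z].
  exact: (def_pblock tP (setU11 _ _) (set11 z)).
split => //.
- move=> x y hR; have [hx hy] := oksupp ok hR.
  have xz : x != z by apply: contraTneq hx => ->; rewrite hz ltnn.
  by rewrite pb // ltS hx orbT.
- exact: okirr ok.
- exact: oktr ok.
- move=> x y hx nxy; case: (eqVneq x z) => [exz|nxz].
    by subst x; rewrite pz in_set1 eq_sym (negbTE nxy).
  have hx' : x < m by move: hx; rewrite ltS (negbTE nxz).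
  rewrite pb //; exact: (oktot ok hx' nxy).
Qed.

Lemma cardL_add P R : okR m P R -> #|[set z] |: P| = #|P|.+1.
Proof.
move=> ok; rewrite cardsU1; suff -> : [set z] \notin P by [].
apply/negP => h; case/negP: (z_notin_ok ok); apply/bigcupP; exists [set z] => //.
exact: set11.
Qed.

Lemma blL_add P : bl ([set z] |: P) = z |: bl P.
Proof.
rewrite bl_U1; congr (_ :|: _); apply/setP => x; rewrite in_set in_set1 /mn in_set1.
apply/andP/idP => [[]//|/eqP->]; split => //; apply/forall_inP => y; rewrite in_set1 => /eqP->//.
Qed.

Lemma blL_rm P R : okR m.+1 P R -> z \in bl P -> bl (P :\ [set z]) = bl P :\ z.
Proof. by move=> ok zb; rewrite bl_D1 ?(ok_triv ok) ?(okL_blk ok zb). Qed.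

Definition rmN (s : LahT N) : LahT N :=
  let Bz := pblock s.1 z in
  ((Bz :\ z) |: (s.1 :\ Bz), [ffun p => s.2 p && (p.1 != z) && (p.2 != z)]).

Definition ins (s : LahT N) C D : LahT N :=
  ((z |: C) |: (s.1 :\ C),
   [ffun p => s.2 p || (p.2 == z) && (p.1 \in D) || (p.1 == z) && (p.2 \in C) && (p.2 \notin D)]).

Section Ins.
Variables (P : {set {set E}}) (R : {ffun E * E -> bool}) (C D : {set E}).
Hypotheses (ok : okR m P R) (hC : C \in P) (hDC : D \subset C)
  (hdown : forall a b, a \in D -> R (b, a) -> b \in D).

Let Pn := (ins (P, R) C D).1.
Let Rn := (ins (P, R) C D).2.

Lemma ins_CA : C \subset A m.
Proof. by rewrite -(cover_partition (okpart ok)); apply: bigcup_max hC _. Qed.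

Lemma ins_xC x : x \in C -> x < m.
Proof. by move=> h; have := subsetP ins_CA x h; rewrite in_set. Qed.

Lemma ins_zC : z \notin C.
Proof. by apply/negP => /ins_xC; rewrite hz ltnn. Qed.

Lemma ins_C0 : C != set0.
Proof. exact: partition_neq0 (okpart ok) hC. Qed.

Lemma ins_part : partition Pn (A m.+1).
Proof.
have h1 := partitionD1 (okpart ok) hC.
have -> : A m.+1 = (z |: C) :|: (A m :\: C).
  apply/setP => x; rewrite A_S !in_setU !in_set1 in_setD.
  case: (boolP (x \in C)) => xC /=; last by rewrite orbF.
  by rewrite (subsetP ins_CA x xC) !orbT.
rewrite /Pn /=; apply: (partitionU1 h1); first by apply/set0Pn; exists z; exact: setU11.
rewrite -setI_eq0; apply/eqP/setP => x; rewrite !inE.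
case: (eqVneq x z) => [->|] /=; first by rewrite hz ltnn andbF.
by case: (x \in C).
Qed.

Lemma ins_triv : trivIset Pn.
Proof. exact: partition_trivIset ins_part. Qed.

Lemma ins_pin x : x \in z |: C -> pblock Pn x = z |: C.
Proof. move=> h; exact: (def_pblock ins_triv (setU11 _ _) h). Qed.

Lemma ins_pout x : x \notin z |: C -> pblock Pn x = pblock P x.
Proof.
move=> h; apply: (pblock_repl (ok_triv ok) ins_triv _ h).
by apply: contra h => xC; rewrite setU1r.
Qed.

Lemma ins_RnE a b : Rn (a, b) =
  R (a, b) || (b == z) && (a \in D) || (a == z) && (b \in C) && (b \notin D).
Proof. by rewrite /Rn /ins /= ffunE. Qed.

Lemma ins_Dz : z \notin D.
Proof. by apply: contra ins_zC; apply: (subsetP hDC). Qed.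

Lemma ins_ok : okR m.+1 Pn Rn.
Proof.
have zC := ins_zC; have zD := ins_Dz.
have pC : forall x, x \in C -> pblock P x = C by move=> x xC; exact: (ok_blk ok hC xC).
split.
- exact: ins_part.
- move=> x y; rewrite ins_RnE => /orP[/orP[h|/andP[/eqP e h]]|/andP[/andP[/eqP e h1] h2]].
  + have [hx hy] := oksupp ok h; split; first by rewrite ltS hx orbT.
    case: (boolP (x \in C)) => xC.
      by rewrite ins_pin ?setU1r // -(pC x xC).
    rewrite ins_pout //; apply/negP => /setU1P[exz|xC']; last by rewrite xC' in xC.
    by move: hx; rewrite exz hz ltnn.
  + subst y; have xC := subsetP hDC x h; split; first by rewrite ltS (ins_xC xC) orbT.
    by rewrite ins_pin; [exact: setU11 | exact: setU1r].
  + subst x; split; first by rewrite ltS eqxx.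
    by rewrite ins_pin; [exact: setU1r | exact: setU11].
- move=> x; rewrite ins_RnE (negbTE (okirr ok x)) /=; apply/negP.
  case/orP => [/andP[/eqP e h]|/andP[/andP[/eqP e h1] _]]; subst x.
    by rewrite h in zD.
  by rewrite h1 in zC.
- move=> x y w; rewrite !ins_RnE.
  move=> /orP[/orP[h|/andP[/eqP e h]]|/andP[/andP[/eqP e h1] h2]].
  + move=> /orP[/orP[h'|/andP[/eqP e' h']]|/andP[/andP[/eqP e' h1'] h2']].
    * by rewrite (oktr ok h h').
    * by subst w; rewrite (hdown h' h) eqxx orbT.
    * by subst y; rewrite (ok_Rz2 _ ok) in h.
  + subst y; move=> /orP[/orP[h'|/andP[/eqP e' h']]|/andP[/andP[/eqP e' h1'] h2']].
    * by rewrite (ok_Rz1 _ ok) in h'.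
    * by subst w; rewrite h' in zD.
    *
      have xC := subsetP hDC x h.
      have xw : x != w by apply: contraNneq h2' => <-.
      have xm := ins_xC xC.
      have wx : w \in pblock P x by rewrite pC.
      case/orP: (oktot ok xm xw wx) => [->//|hwx].
      by rewrite (hdown h hwx) in h2'.
  + subst x; move=> /orP[/orP[h'|/andP[/eqP e' h']]|/andP[/andP[/eqP e' h1'] h2']].
    * have [hy hw] := oksupp ok h'.
      have wC : w \in C by rewrite -(pC y h1).
      have wD : w \notin D by apply: contra h2 => wD; exact: (hdown wD h').
      by rewrite eqxx wC wD orbT.
    * by subst w; rewrite h' in h2.
    * by subst y; rewrite h1 in zC.
- move=> x y hx nxy.
  case: (boolP (x \in z |: C)) => xzC; last first.
    rewrite ins_pout // => hy.
    have xz : x != z by apply: contra xzC => /eqP->; exact: setU11.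
    have xm : x < m by move: hx; rewrite ltS (negbTE xz).
    apply/orP; case/orP: (oktot ok xm nxy hy) => h; [left|right]; rewrite ins_RnE; apply/orP; left; apply/orP; left; exact: h.
  rewrite ins_pin // => hy; rewrite !ins_RnE.
  case/setU1P: xzC => [exz|xC].
    subst x; case/setU1P: hy => [eyz|yC]; first by rewrite eyz eqxx in nxy.
    by case: (boolP (y \in D)) => yD; rewrite eqxx ?yC /= ?orbT.
  case/setU1P: hy => [eyz|yC].
    by subst y; case: (boolP (x \in D)) => xD; rewrite eqxx ?xC /= ?orbT.
  have yx : y \in pblock P x by rewrite pC.
  apply/orP; case/orP: (oktot ok (ins_xC xC) nxy yx) => h; [left|right]; apply/orP; left; apply/orP; left; exact: h.
Qed.


Lemma ins_zCP : z |: C \notin P :\ C.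
Proof.
apply/negP; rewrite in_setD1 => /andP[_ h]; case/negP: (z_notin_ok ok).
by apply/bigcupP; exists (z |: C) => //; exact: setU11.
Qed.

Lemma ins_card : #|Pn| = #|P|.
Proof. by rewrite /Pn /= cardsU1 ins_zCP (cardsD1 C P) hC. Qed.

Lemma ins_bl : bl Pn = bl P.
Proof. exact: (bl_repl (ok_triv ok) hC (fun x => mn_U1 x ins_C0 ins_CA)). Qed.

Lemma ins_zbl : z \notin bl Pn.
Proof. by rewrite ins_bl; exact: (z_notin_bl ok). Qed.

Lemma ins_rm : rmN (ins (P, R) C D) = (P, R).
Proof.
rewrite /rmN; congr pair.
  have -> : pblock (ins (P, R) C D).1 z = z |: C by apply: ins_pin; exact: setU11.
  by rewrite /= setU1K ?ins_zC // setU1K ?ins_zCP // setD1K.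
apply/ffunP => -[a b]; rewrite ffunE /= -/Rn ins_RnE /=.
case: (eqVneq a z) => [->|az]; first by rewrite (ok_Rz1 _ ok) /= !andbF.
case: (eqVneq b z) => [->|bz]; first by rewrite (ok_Rz2 _ ok) /= !andbF.
by rewrite /= ?andbT ?andbF ?orbF ?andbT.
Qed.
End Ins.

Definition Pos (s : LahT N) : {set ('I_N + {set 'I_N})%type} :=
  [set inl y | y in A m] :|: [set inr B | B in s.1].

Definition insP (s : LahT N) (p : ('I_N + {set 'I_N})%type) : LahT N :=
  match p with
  | inl y => ins s (pblock s.1 y) [set a | (a == y) || s.2 (a, y)]
  | inr B => ins s B set0
  end.

Section Rm.
Variables (P : {set {set E}}) (R : {ffun E * E -> bool}).
Hypotheses (ok : okR m.+1 P R) (nzb : z \notin bl P).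

Let Bz := pblock P z.
Let C := Bz :\ z.
Let P' := (rmN (P, R)).1.
Let R' := (rmN (P, R)).2.

Lemma rm_zm : z < m.+1.
Proof. by rewrite hz. Qed.

Lemma rm_Bz : Bz \in P.
Proof. exact: (ok_mem ok rm_zm). Qed.

Lemma rm_zBz : z \in Bz.
Proof. exact: (ok_self ok rm_zm). Qed.

Lemma rm_C0 : C != set0.
Proof.
apply/negP => /eqP e; case/negP: nzb; apply/blP; exists Bz; first exact: rm_Bz.
apply/andP; split; first exact: rm_zBz.
apply/forall_inP => y yB; case: (eqVneq y z) => [->//|yz].
have : y \in C by rewrite in_setD1 yz yB.
by rewrite e inE.
Qed.

Lemma rm_CA : C \subset A m.
Proof.
apply/subsetP => x; rewrite in_setD1 => /andP[xz xB].
have := ok_sub ok rm_Bz xB; rewrite ltS (negbTE xz) /= => h; by rewrite in_set.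
Qed.

Lemma rm_BzE : z |: C = Bz.
Proof. exact: setD1K rm_zBz. Qed.

Lemma rm_CP : C \notin P :\ Bz.
Proof.
apply/negP; rewrite in_setD1 => /andP[nCB hCP].
move/trivIsetP: (ok_triv ok) => tP.
have := tP C Bz hCP rm_Bz nCB; case/set0Pn: rm_C0 => x xC.
have xB : x \in Bz by move: xC; rewrite in_setD1 => /andP[].
by move/disjointFr => /(_ x xC); rewrite xB.
Qed.

Lemma rm_P'E : P' = C |: (P :\ Bz).
Proof. by []. Qed.

Lemma rm_part : partition P' (A m).
Proof.
have h1 := partitionD1 (okpart ok) rm_Bz.
have -> : A m = C :|: (A m.+1 :\: Bz).
  apply/setP => x; rewrite in_setU in_setD1 in_setD !in_set ltS.
  case: (eqVneq x z) => [->|xz] /=; first by rewrite hz ltnn rm_zBz.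
  case: (boolP (x \in Bz)) => xB //=; by have := ok_sub ok rm_Bz xB; rewrite ltS (negbTE xz).
rewrite rm_P'E; apply: (partitionU1 h1); first exact: rm_C0.
rewrite -setI_eq0; apply/eqP/setP => x; rewrite !inE.
by case: (x \in Bz); rewrite /= ?andbF.
Qed.

Lemma rm_triv : trivIset P'.
Proof. exact: partition_trivIset rm_part. Qed.

Lemma rm_pin x : x \in C -> pblock P' x = C.
Proof. move=> h; exact: (def_pblock rm_triv (setU11 _ _) h). Qed.

Lemma rm_pout x : x \notin Bz -> pblock P' x = pblock P x.
Proof.
move=> h; apply: (pblock_repl (ok_triv ok) rm_triv h).
by rewrite in_setD1 negb_and h orbT.
Qed.

Lemma rm_RE a b : R' (a, b) = R (a, b) && (a != z) && (b != z).
Proof. by rewrite /R' /rmN /= ffunE. Qed.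

Lemma rm_ok : okR m P' R'.
Proof.
have pB : forall x, x \in Bz -> pblock P x = Bz by move=> x xB; exact: (ok_blk ok rm_Bz xB).
split.
- exact: rm_part.
- move=> x y; rewrite rm_RE => /andP[/andP[h xz] yz].
  have [hx hy] := oksupp ok h.
  split; first by move: hx; rewrite ltS (negbTE xz).
  case: (boolP (x \in Bz)) => xB.
    rewrite rm_pin; last by rewrite in_setD1 xz.
    by rewrite in_setD1 yz -(pB x xB).
  by rewrite rm_pout.
- by move=> x; rewrite rm_RE (negbTE (okirr ok x)).
- move=> x y w; rewrite !rm_RE => /andP[/andP[h1 xz] _] /andP[/andP[h2 _] wz].
  by rewrite (oktr ok h1 h2) xz wz.
- move=> x y hx nxy hy.
  have xz : x != z by apply: contraTneq hx => ->; rewrite hz ltnn.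
  have yc : y \in cover P'.
    apply/bigcupP; exists (pblock P' x) => //; apply: pblock_mem.
    by rewrite (cover_partition rm_part) in_set.
  have yz : y != z.
    by apply: contraTneq yc => ->; rewrite (cover_partition rm_part) in_set hz ltnn.
  have hy' : y \in pblock P x.
    case: (boolP (x \in Bz)) => xB.
      by move: hy; rewrite rm_pin ?in_setD1 ?xz // (pB x xB) => /andP[].
    by rewrite -rm_pout.
  have hx' : x < m.+1 by rewrite ltS hx orbT.
  by rewrite !rm_RE xz yz /= !andbT; exact: (oktot ok hx' nxy hy').
Qed.

Lemma rm_card : #|P'| = #|P|.
Proof. by rewrite rm_P'E cardsU1 rm_CP (cardsD1 Bz P) rm_Bz. Qed.

Lemma rm_mn x : mn C x = mn Bz x.
Proof. by rewrite -(mn_U1 x rm_C0 rm_CA) rm_BzE. Qed.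

Lemma rm_bl : bl P' = bl P.
Proof. exact: (bl_repl (ok_triv ok) rm_Bz rm_mn). Qed.

Lemma rm_insP : (z |: C) |: (P' :\ C) = P.
Proof. by rewrite rm_P'E setU1K ?rm_CP // rm_BzE setD1K // rm_Bz. Qed.

Lemma rm_surj : exists2 p, p \in Pos (rmN (P, R)) & insP (rmN (P, R)) p = (P, R).
Proof.
have zB := rm_zBz.
have pB : forall x, x \in Bz -> pblock P x = Bz by move=> x xB; exact: (ok_blk ok rm_Bz xB).
have Rz : forall a, R (a, z) -> a \in Bz /\ a != z.
  move=> a h; have [ha hza] := oksupp ok h; split; last first.
    by apply: contraTneq h => ->; rewrite (negbTE (okirr ok z)).
  by rewrite /Bz (ok_same ok hza) (ok_self ok ha).
have zR : forall b, R (z, b) -> b \in Bz /\ b != z.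
  move=> b h; have [_ hb] := oksupp ok h; split => //.
  by apply: contraTneq h => ->; rewrite (negbTE (okirr ok z)).
case: (pickP [pred a | R (a, z)]) => [a0 h0|none].
- case: (@arg_maxnP _ a0 [pred y | R (y, z)] (fun y => #|[set b | R (b, y)]|) h0)
     => y /= hy hmax.
  have [yB yz] := Rz y hy.
  have ym : y < m by have := ok_sub ok rm_Bz yB; rewrite ltS (negbTE yz).
  have maxy : forall a, R (a, z) -> (a == y) || R (a, y).
    move=> a ha; case: (eqVneq a y) => [//|ay] /=.
    have [aB az] := Rz a ha.
    have am : a < m.+1 by have := ok_sub ok rm_Bz aB.
    have yaB : y \in pblock P a by rewrite pB.
    case/orP: (oktot ok am ay yaB) => // hya.
    have := hmax a ha; rewrite leqNgt => /negP; case; apply: proper_card.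
    apply/properP; split.
      apply/subsetP => b; rewrite !in_set => hb; exact: (oktr ok hb hya).
    by exists y; rewrite !in_set ?hya // (negbTE (okirr ok y)).
  have yC : y \in C by rewrite in_setD1 yz yB.
  exists (inl y); first by rewrite in_setU; apply/orP; left; apply: imset_f; rewrite in_set.
  rewrite /insP /=; have -> : pblock (rmN (P, R)).1 y = C by exact: rm_pin.
  rewrite /ins; congr pair; first exact: rm_insP.
  apply/ffunP => -[a b]; rewrite ffunE /= -/R' !rm_RE in_setD1 !in_set !ffunE /=.
  case: (eqVneq a z) => [->|az]; case: (eqVneq b z) => [->|bz] /=.
  + by rewrite (negbTE (okirr ok z)) eq_sym (negbTE yz) !andbF.
  + rewrite !andbF orbF /= yz !andbT.
    apply/idP/idP.
      case/andP=> bB hn.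
      have zb : z != b by rewrite eq_sym.
      case/orP: (oktot ok rm_zm zb bB) => // hbz.
      by have := maxy b hbz; rewrite (negbTE hn).
    move=> h; have [bB _] := zR b h; rewrite bB /=.
    apply/negP => /orP[/eqP eby|hby].
      by subst b; have := oktr ok h hy; rewrite (negbTE (okirr ok z)).
    by have := oktr ok (oktr ok h hby) hy; rewrite (negbTE (okirr ok z)).
  + rewrite !andbT andbF !orbF yz !andbT; apply/idP/idP.
      case/orP => [//|/orP[/eqP->//|hay]]; exact: (oktr ok hay hy).
    by move=> h; have := maxy a h.
  + by rewrite !andbT !orbF.
- have hC : C \in P' by rewrite rm_P'E; exact: setU11.
  exists (inr C); first by rewrite in_setU; apply/orP; right; apply: imset_f.
  rewrite /insP /ins; congr pair; first exact: rm_insP.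
  apply/ffunP => -[a b]; rewrite ffunE /= -/R' !rm_RE in_set0 in_setD1.
  have nz : forall c, R (c, z) = false by move=> c; have := none c.
  case: (eqVneq a z) => [->|az]; case: (eqVneq b z) => [->|bz] /=.
  + by rewrite (negbTE (okirr ok z)) !andbF.
  + rewrite !andbF andbT /=; apply/idP/idP.
      case/andP => bB _.
      have zb : z != b by rewrite eq_sym.
      by case/orP: (oktot ok rm_zm zb bB) => //; rewrite nz.
    by move=> h; have [bB _] := zR b h; rewrite bB inE.
  + by rewrite nz.
  + by rewrite !andbT !orbF.
Qed.
End Rm.

Lemma insP_Rz P R p a : okR m P R -> a != z ->
  (insP (P, R) p).2 (a, z) = (if p is inl y then (a == y) || R (a, y) else false).
Proof.
move=> ok az; case: p => [y|B]; rewrite /insP /ins /= ffunE /= (ok_Rz2 _ ok) eqxx /=;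
  by rewrite (negbTE az) ?andbF ?in_set ?inE ?orbF.
Qed.

Lemma insP_zR P R B b : okR m P R -> b != z -> (insP (P, R) (inr B)).2 (z, b) = (b \in B).
Proof.
by move=> ok bz; rewrite /insP /ins /= ffunE /= (ok_Rz1 _ ok) eqxx (negbTE bz) /= inE /= ?andbT.
Qed.

Lemma fapp (f g : {ffun E * E -> bool}) q : f = g -> f q = g q.
Proof. by move=> ->. Qed.

Lemma insP_inj P R : okR m P R -> {in Pos (P, R) &, injective (insP (P, R))}.
Proof.
move=> ok p1 p2 h1 h2 e; have eR := congr1 snd e.
have Am : forall y, inl y \in Pos (P, R) -> y != z.
  move=> y; rewrite in_setU => /orP[/imsetP[y' hy' [->]]|/imsetP[B _ //]].
  by apply: contraTneq hy' => ->; exact: zA.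
have PB : forall B, inr B \in Pos (P, R) -> B \in P.
  by move=> B; rewrite in_setU => /orP[/imsetP[y' _ //]|/imsetP[B' hB' [->]]].
case: p1 p2 h1 h2 e eR => [y1|B1] [y2|B2] h1 h2 e eR.
- have y1z := Am _ h1; have y2z := Am _ h2.
  have := fapp (y1, z) eR; rewrite !insP_Rz // eqxx /= => /esym/orP[/eqP->//|r12].
  have := fapp (y2, z) eR; rewrite !insP_Rz // eqxx /= => /orP[/eqP->//|r21].
  by have := oktr ok r12 r21; rewrite (negbTE (okirr ok y1)).
- have y1z := Am _ h1.
  by have := fapp (y1, z) eR; rewrite !insP_Rz // eqxx.
- have y2z := Am _ h2.
  by have := fapp (y2, z) eR; rewrite !insP_Rz // eqxx.
- congr inr; apply/setP => b; case: (eqVneq b z) => [->|bz].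
    have zc := z_notin_ok ok.
    have nB : forall B, B \in P -> z \notin B.
      by move=> B hB; apply: contra zc => zB; apply/bigcupP; exists B.
    by rewrite (negbTE (nB _ (PB _ h1))) (negbTE (nB _ (PB _ h2))).
  by have := fapp (z, b) eR; rewrite !insP_zR.
Qed.

Lemma card_A' : m <= N -> #|A m| = m.
Proof.
move=> mN; rewrite -[in RHS](card_ord m).
have -> : A m = [set widen_ord mN i | i : 'I_m].
  apply/setP => x; rewrite in_set; apply/idP/imsetP => [h|[i _ ->]] //=.
  by exists (Ordinal h) => //; apply/val_inj.
by rewrite card_imset //; move=> i j /(congr1 val) /= /val_inj.
Qed.

Lemma Pos_inl s y : (inl y \in Pos s) = (y \in A m).
Proof.
rewrite in_setU; apply/orP/idP => [[]|h]; last by left; exact: imset_f.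
  by case/imsetP => q hq [->].
by case/imsetP => q _ h; discriminate h.
Qed.

Lemma Pos_inr s B : (inr B \in Pos s) = (B \in s.1).
Proof.
rewrite in_setU; apply/orP/idP => [[]|h]; last by right; exact: imset_f.
  by case/imsetP => q _ h; discriminate h.
by case/imsetP => q hq [->].
Qed.

Definition Fib k (s' : LahT N) :=
  [set s : LahT N | okP m.+1 k s && (z \notin bl s.1) && (rmN s == s')].

Lemma Fib_E k s' : okP m k s' -> Fib k s' = insP s' @: Pos s'.
Proof.
case: s' => P R /okPP[ok hk] /=; apply/setP => s; rewrite in_set.
apply/idP/imsetP.
  case: s => sP sR /andP[/andP[/okPP[/= oks hks] nzb] /eqP e].
  case: (rm_surj oks nzb) => p; rewrite e => hp hs; by exists p.
case=> p hp ->.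
have [C [D [hC hDC hdown ->]]] : exists C D, [/\ C \in P, D \subset C,
    (forall a b, a \in D -> R (b, a) -> b \in D) & insP (P, R) p = ins (P, R) C D].
  case: p hp => [y|B]; [rewrite Pos_inl | rewrite Pos_inr] => hy'.
  - rewrite in_set in hy'.
    exists (pblock P y), [set a | (a == y) || R (a, y)]; split => //.
    + exact: (ok_mem ok hy').
    + apply/subsetP => a; rewrite in_set => /orP[/eqP->|hay]; first exact: (ok_self ok hy').
      have [am ya] := oksupp ok hay; rewrite (ok_same ok ya).
      exact: (ok_self ok am).
    + move=> a b; rewrite !in_set => /orP[/eqP->|hay] hba; first by rewrite hba orbT.
      by rewrite (oktr ok hba hay) orbT.
  - exists B, set0; split => //; first exact: sub0set.
    by move=> a b; rewrite inE.
rewrite (ins_rm D ok hC) eqxx andbT (ins_zbl D ok hC) andbT.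
apply/okPP; split; first exact: (ins_ok ok hC hDC hdown).
by rewrite (ins_card D ok hC).
Qed.

Lemma card_Fib k s' : m < N -> okP m k s' -> #|Fib k s'| = m + k.
Proof.
move=> mN hs; rewrite Fib_E // card_in_imset; last by case: s' hs => P R /okPP[ok _]; exact: insP_inj.
case: s' hs => P R /okPP[ok <-] /=.
rewrite /Pos cardsU.
have -> : [set inl y | y in A m] :&: [set inr B | B in P] = set0.
  apply/setP => q; rewrite !inE; apply/negP => /andP[/imsetP[y _ ->] /imsetP[B _ //]].
rewrite cards0 subn0 !card_imset; first by rewrite card_A' // ltnW.
  by move=> a b [].
by move=> a b [].
Qed.

Definition rmL (s : LahT N) : LahT N := (s.1 :\ [set z], s.2).
Definition addL (s : LahT N) : LahT N := ([set z] |: s.1, s.2).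

Lemma rmL_facts k s : okP m.+1 k.+1 s -> z \in bl s.1 ->
  [/\ okP m k (rmL s), bl (rmL s).1 = bl s.1 :\ z & addL (rmL s) = s].
Proof.
case: s => P R /okPP[/= ok hk] /= zb; have hB := okL_blk ok zb.
split.
- apply/okPP; split; first exact: okL_rm ok zb.
  by move: hk; rewrite /= (cardsD1 [set z] P) hB add1n => -[].
- exact: blL_rm ok zb.
- by rewrite /addL /rmL /= setD1K.
Qed.

Lemma addL_facts k s : okP m k s ->
  [/\ okP m.+1 k.+1 (addL s), bl (addL s).1 = z |: bl s.1 & rmL (addL s) = s].
Proof.
case: s => P R /okPP[/= ok hk]; split.
- apply/okPP; split; first exact: okL_add ok.
  by rewrite /= (cardL_add ok) hk.
- exact: blL_add.
- rewrite /addL /rmL /= setU1K //; apply/negP => h; case/negP: (z_notin_ok ok).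
  by apply/bigcupP; exists [set z] => //; exact: set11.
Qed.

Lemma rmN_facts k s : okP m.+1 k s -> z \notin bl s.1 ->
  okP m k (rmN s) /\ bl (rmN s).1 = bl s.1.
Proof.
case: s => P R /okPP[/= ok hk] /= zb; split.
- apply/okPP; split; first exact: rm_ok ok zb.
  by rewrite rm_card.
- exact: rm_bl ok zb.
Qed.
End Step.

Lemma card_fam (I T : finType) (F : I -> {set T}) (c : nat) :
  (forall i, #|F i| = c) ->
  #|[set t : {ffun I -> T} | [forall i, t i \in F i]]| = c ^ #|I|.
Proof.
move=> hc.
have -> : #|[set t : {ffun I -> T} | [forall i, t i \in F i]]| =
    #|(family (fun i => mem (F i)) : simpl_pred {ffun I -> T})|.
  apply: eq_card => t; rewrite in_set; apply/forallP/familyP => h i; have := h i => //.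
rewrite card_family cardE /image_mem.
elim: (enum I) => [|a s IH] /=; first by [].
by rewrite hc IH expnS.
Qed.

Section Tup.
Variables (l r : nat).
Local Notation TT := {ffun 'I_l -> LahT N}.

Definition leadc m (t : TT) :=
  [forall i : 'I_l, (i == 0 :> nat) ==>
     [forall x : E, (x < r) && (x < m) ==> (x \in bl (t i).1)]].
Definition eqbl (t : TT) := [forall i, forall j, bl (t i).1 == bl (t j).1].
Definition TS m k := [set t : TT | [&& [forall i, okP m k (t i)], leadc m t & eqbl t]].

Lemma eqblP (t : TT) : reflect (forall i j, bl (t i).1 = bl (t j).1) (eqbl t).
Proof.
apply: (iffP forallP) => h i; first by move=> j; apply/eqP; exact: (forallP (h i) j).
by apply/forallP => j; apply/eqP.
Qed.

Lemma leadcP m (t : TT) (i0 : 'I_l) : i0 = 0 :> nat ->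
  reflect (forall x : E, x < r -> x < m -> x \in bl (t i0).1) (leadc m t).
Proof.
move=> h0; apply: (iffP forallP) => h.
  by move=> x hr hm; have := h i0; rewrite h0 eqxx /= => /forallP/(_ x); rewrite hr hm.
move=> i; apply/implyP => /eqP hi; have -> : i = i0 by apply/val_inj; rewrite /= hi h0.
by apply/forallP => x; apply/implyP => /andP[a b]; exact: h.
Qed.

Lemma TS0 k : 0 < l -> #|TS 0 k| = (k == 0).
Proof.
move=> l0; pose s0 : LahT N := (set0, [ffun _ => false]).
have ok0 : forall s, okP 0 k s -> s = s0 /\ k = 0.
  case=> P R /okPP[/= ok hk].
  have eP : P = set0.
    apply/eqP; rewrite -partition_set0; have := okpart ok.
    by have -> : A 0 = set0 by apply/setP => x; rewrite !inE.
  have eR : R = [ffun _ => false].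
    apply/ffunP => -[a b]; rewrite ffunE; apply/negP => /(oksupp ok)[].
    by rewrite ltn0.
  by split; [rewrite eP eR | rewrite -hk eP cards0].
have oks0 : okP 0 0 s0.
{ apply/okPP; split; last by rewrite /= cards0.
  have A0 : A 0 = set0 by apply/setP => x; rewrite !inE.
  split => //=; first by rewrite A0 partition_set0.
  all: try (by move=> x y; rewrite ffunE).
  all: try (by move=> x; rewrite ffunE).
  all: try (by move=> x y w; rewrite ffunE).
  all: by move=> x y; rewrite ltn0. }
case: (eqVneq k 0) => [ek|nk]; last first.
  apply/eqP; rewrite /= cards_eq0; apply/eqP/setP => t; rewrite !inE.
  apply/negP => /andP[/forallP h _].
  by have [_ ek] := ok0 _ (h (Ordinal l0)); rewrite ek in nk.
subst k.
have -> : TS 0 0 = [set [ffun _ => s0]].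
  apply/setP => t; rewrite !inE; apply/idP/idP.
    case/andP => /forallP h _; apply/eqP/ffunP => i; rewrite ffunE.
    by have [-> _] := ok0 _ (h i).
  move/eqP->; apply/and3P; split.
  - by apply/forallP => i; rewrite ffunE.
  - apply/forallP => i; apply/implyP => _; apply/forallP => x; apply/implyP => /andP[_].
    by rewrite ltn0.
  - by apply/forallP => i; apply/forallP => j; rewrite !ffunE.
by rewrite cards1.
Qed.


Lemma TS_rec m k : 0 < l -> m < N ->
  #|TS m.+1 k| = (if k is k'.+1 then #|TS m k'| else 0)
                 + (if r <= m then (m + k) ^ l * #|TS m k| else 0).
Proof.
move=> l0 mN; pose z := Ordinal mN; have hz : nat_of_ord z = m by [].
pose i0 : 'I_l := Ordinal l0; have hi0 : nat_of_ord i0 = 0 by [].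
rewrite -(cardsID [set t : TT | z \in bl (t i0).1] (TS m.+1 k)).
congr (_ + _).
- case: k => [|k'].
    apply/eqP; rewrite cards_eq0; apply/eqP/setP => t; rewrite !inE.
    apply/negP => /andP[/and3P[/forallP h _ _] zb].
    have /okPP[_ hk] := h i0; move/eqP: hk; rewrite cards_eq0 => /eqP e.
    by case/exists_inP: zb => B; rewrite e inE.
  have -> : TS m.+1 k'.+1 :&: [set t : TT | z \in bl (t i0).1] =
      [set ([ffun i => addL z (t' i)] : TT) | t' : TT in TS m k'].
    apply/setP => t; rewrite in_setI in_set in_set; apply/idP/imsetP.
      case/andP => /and3P[/forallP hok hlead /eqblP heq] zb.
      have zbi : forall i, z \in bl (t i).1 by move=> i; rewrite (heq i i0).
      exists [ffun i => rmL z (t i)].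
        rewrite in_set; apply/and3P; split.
        + apply/forallP => i; rewrite ffunE; by case: (rmL_facts hz (hok i) (zbi i)).
        + apply/(leadcP _ _ hi0) => x hr hm; rewrite ffunE.
          case: (rmL_facts hz (hok i0) (zbi i0)) => _ -> _.
          rewrite in_setD1; apply/andP; split.
            by apply: contraTneq hm => ->; rewrite hz ltnn.
          by move/(leadcP _ _ hi0): hlead; apply => //; rewrite (ltS hz) hm orbT.
        + apply/eqblP => i j; rewrite !ffunE.
          case: (rmL_facts hz (hok i) (zbi i)) => _ -> _.
          by case: (rmL_facts hz (hok j) (zbi j)) => _ -> _; rewrite (heq i j).
      apply/ffunP => i; rewrite !ffunE; by case: (rmL_facts hz (hok i) (zbi i)).
    case=> t' ht' ->; rewrite in_set in ht'.
    case/and3P: ht' => /forallP hok hlead /eqblP heq.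
    apply/andP; split; [apply/and3P; split|].
    + apply/forallP => i; rewrite ffunE; by case: (addL_facts hz (hok i)).
    + apply/(leadcP _ _ hi0) => x hr hm; rewrite ffunE.
      case: (addL_facts hz (hok i0)) => _ -> _; rewrite in_setU1.
      move: hm; rewrite (ltS hz) => /orP[->//|hm]; apply/orP; right.
      by move/(leadcP _ _ hi0): hlead; apply.
    + apply/eqblP => i j; rewrite !ffunE.
      case: (addL_facts hz (hok i)) => _ -> _.
      by case: (addL_facts hz (hok j)) => _ -> _; rewrite (heq i j).
    + rewrite ffunE; case: (addL_facts hz (hok i0)) => _ -> _; exact: setU11.
  rewrite card_in_imset // => t1 t2; rewrite !in_set => /and3P[/forallP h1 _ _] /and3P[/forallP h2 _ _] e.
  apply/ffunP => i; have := congr1 (fun t : TT => rmL z (t i)) e; rewrite !ffunE.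
  by case: (addL_facts hz (h1 i)) => _ _ ->; case: (addL_facts hz (h2 i)) => _ _ ->.
- case: (leqP r m) => hr; last first.
    apply/eqP; rewrite cards_eq0; apply/eqP/setP => t; rewrite in_setD [t \in TS _ _]in_set [t \in _]in_set in_set0.
    apply/negP => /andP[/negP nzb /and3P[_ hlead _]]; apply: nzb.
    by move/(leadcP _ _ hi0): hlead; apply; rewrite hz // ltnSn.
  pose LS := [set t : TT | z \in bl (t i0).1].
  have inLS : forall t, (t \in LS) = (z \in bl (t i0).1) by move=> t; rewrite [t \in _]in_set.
  have inTS : forall m' k' t, (t \in TS m' k') = [&& [forall i, okP m' k' (t i)], leadc m' t & eqbl t].
    by move=> m' k' t; rewrite [t \in _]in_set.
  pose rmT (t : TT) : TT := [ffun i => rmN z (t i)].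
  have mapY : forall t, t \in TS m.+1 k :\: LS -> rmT t \in TS m k.
    move=> t; rewrite in_setD inLS inTS => /andP[nzb /and3P[/forallP hok hlead /eqblP heq]].
    have nzi : forall i, z \notin bl (t i).1 by move=> i; rewrite (heq i i0).
    rewrite inTS; apply/and3P; split.
    - apply/forallP => i; rewrite ffunE; by case: (rmN_facts hz (hok i) (nzi i)).
    - apply/(leadcP _ _ hi0) => x hxr hxm; rewrite ffunE.
      case: (rmN_facts hz (hok i0) (nzi i0)) => _ ->.
      by move/(leadcP _ _ hi0): hlead; apply => //; rewrite (ltS hz) hxm orbT.
    - apply/eqblP => i j; rewrite !ffunE.
      case: (rmN_facts hz (hok i) (nzi i)) => _ ->.
      by case: (rmN_facts hz (hok j) (nzi j)) => _ ->; rewrite (heq i j).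
  have fib : forall t', t' \in TS m k ->
      #|[pred t | (t \in TS m.+1 k :\: LS) && (rmT t == t')]| = (m + k) ^ l.
    move=> t'; rewrite inTS => /and3P[/forallP hok' hlead' /eqblP heq'].
    have hc := @card_fam 'I_l (LahT N) (fun i => Fib m z k (t' i)) (m + k)
      (fun i => card_Fib hz mN (hok' i)).
    rewrite card_ord in hc; rewrite -hc.
    apply: eq_card => t; rewrite [in RHS]in_set unfold_in in_setD inLS inTS.
    apply/idP/idP.
      case/andP => /andP[nzb /and3P[/forallP hok hlead /eqblP heq]] /eqP <-.
      have nzi : forall i, z \notin bl (t i).1 by move=> i; rewrite (heq i i0).
      apply/forallP => i; rewrite in_set ffunE hok eqxx nzi.
      done.
    move/forallP => hf.
    have hf' : forall i, [/\ okP m.+1 k (t i), z \notin bl (t i).1 & rmN z (t i) = t' i].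
      by move=> i; have := hf i; rewrite in_set => /andP[/andP[a b] /eqP c].
    have bli : forall i, bl (t i).1 = bl (t' i).1.
      move=> i; case: (hf' i) => a b c.
      by case: (rmN_facts hz a b) => _ <-; rewrite c.
    apply/andP; split; last first.
      by apply/eqP/ffunP => i; rewrite ffunE; case: (hf' i).
    apply/andP; split; first by case: (hf' i0).
    apply/and3P; split.
    - by apply/forallP => i; case: (hf' i).
    - apply/(leadcP _ _ hi0) => x hxr hxm; rewrite bli.
      move/(leadcP _ _ hi0): hlead'; apply => //.
      by move: hxm; rewrite (ltS hz) => /orP[/eqP exz|//]; move: hxr; rewrite exz hz ltnNge hr.
    - by apply/eqblP => i j; rewrite !bli (heq' i j).
  rewrite -[LHS]sum1_card (partition_big rmT (mem (TS m k))) /=; last exact: mapY.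
  rewrite (eq_bigr (fun _ => (m + k) ^ l)); last first.
    move=> t' ht'; rewrite -(fib t' ht') -sum1_card; apply: eq_bigl => t.
    by rewrite [in RHS]unfold_in.
  by rewrite sum_nat_const mulnC.
Qed.
End Tup.
End Struct.

Lemma TS_Fc N l r m k : 0 < l -> 0 < r -> m <= N -> #|TS N l r m k| = Fc l r m k.
Proof.
move=> l0 r0; elim: m k => [|m IH] k hm; first by rewrite TS0.
rewrite TS_rec //=; case: k => [|k']; rewrite ?IH //; exact: ltnW.
Qed.

Lemma lah_okP n k (s : LahT n) : lah_partition k s = okP n k s.
Proof.
have An : A n n = [set: 'I_n] by apply/setP => x; rewrite !inE ltn_ord.
rewrite /lah_partition /okP An.
case hp : (partition s.1 [set: 'I_n]) => //=.
have tP := partition_trivIset hp.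
have cov : forall x : 'I_n, x \in cover s.1 by move=> x; rewrite (cover_partition hp) inE.
congr [&& _, _, _, _ & _].
- apply: eq_forallb => x; apply: eq_forallb => y; by rewrite ltn_ord eq_pblock.
- apply: eq_forallb => x; apply: eq_forallb => y; by rewrite ltn_ord eq_pblock.
Qed.

Lemma lahL_TS l r n k : lahL l r n k = #|TS n l r n k|.
Proof.
rewrite /lahL; apply: eq_card => t; rewrite [t \in TS _ _ _ _ _]in_set [in LHS]in_set.
congr [&& _, _ & _].
- by apply: eq_forallb => i; rewrite lah_okP.
- apply: eq_forallb => i; congr (_ ==> _); apply: eq_forallb => x.
  by rewrite ltn_ord andbT.
Qed.

Theorem mainTheorem8 (l r n k : nat) (hl : 0 < l) (hr : 0 < r) (hn : r <= n)
    (hk : 0 < k) :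
  lahL l r n k.-1 * lahL l r n k.+1 <= lahL l r n k ^ 2.
Proof.
rewrite !lahL_TS !TS_Fc //; exact: Fc_lc.
Qed.
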